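(* Let $G=(V,E)$ be a bi-connected embedded planar graph, $T$ a spanning tree of $G$, and $w_V:V\to\mathbb{R}_{\ge0}$ a vertex-weight assignment with $w_V(x)\le\frac{1}{12}w_V(G)$ for every vertex $x$. Transfer weights to faces as follows: each vertex transfers its weight to one arbitrary face containing it, and $w_F(f)$ is the total weight of vertices that transferred to $f$. Let $T^*$ be the cotree of $T$ (a spanning tree of the dual graph $G^*$), rooted at an arbitrary node, with node weights $w_F$. Then: (1) If $T^*$ has a $(\frac14,\frac34)$-balanced node $f$ with respect to $w_F$, let $u,v$ be the endpoints of the primal edge $e$ dual to the tree edge $(f,\mathsf{parent}(f))$ of $T^*$. Then the $u$-to-$v$ path $P$ in $T$ is a $\frac34$-balanced separator of $G$ with respect to $w_V$, and $P\cup\{e\}=C(T,e)$. (2) Otherwise, $T^*$ has a $(\frac14,\frac34)$-critical node $f$ with respect to $w_F$, and there are two vertices $u,v$ on the face $f$ such that the $u$-to-$v$ path $P$ in $T$ is a $\frac34$-balanced separator of $G$ with respect to $w_V$; moreover, adding the edge $e=(u,v)$ to $G$ (drawn inside $f$) does not violate planarity, and $P\cup\{e\}=C(T,e)$.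
   Context: The dual $G^*$ of an embedded planar graph $G$ has a node for each face of $G$ and, for each edge $e$ of $G$, an edge $e^*$ between the nodes of the two faces on either side of $e$ (a self-loop if they coincide). For a spanning tree $T$ of $G$, the cotree $T^*$ is the set of edges dual to $E\setminus T$; it is a spanning tree of $G^*$. $C(T,e)$ for $e\notin T$ denotes the fundamental cycle: the unique cycle in $T\cup\{e\}$. $w_V(G)$ is the total vertex weight. For a rooted tree $T^*$ with node weights, $T^*_f$ is the subtree rooted at $f$, $w(T^*_f)$ its total node weight, and $w(T^* )$ the total weight. A node $f$ is $(\alpha,\beta)$-balanced if $\alpha w(T^* )\le w(T^*_f)\le\beta w(T^* )$; it is $(\alpha,\beta)$-critical if $w(T^*_f)>\beta w(T^* )$ and $w(T^*_h)<\alpha w(T^* )$ for every child $h$ of $f$. A set $S$ of vertices is a $c$-balanced separator (w.r.t. $w_V$) if each connected component of $G\setminus S$ has total weight at most $c\cdot w_V(G)$. *)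

(* Defs.v *)
(* Embedded planar graphs are represented as combinatorial
   maps (rotation systems) on a finite type of darts. *)
From mathcomp Require Import all_boot all_order all_algebra.
Set Implicit Arguments. Unset Strict Implicit. Unset Printing Implicit Defensive.
Import Order.TTheory GRing.Theory Num.Theory.

Definition avoid (A : finType) (r : rel A) (S : {set A}) : rel A :=
  fun x y => [&& x \notin S, y \notin S & r x y].

Definition connected_rel (A : finType) (r : rel A) : Prop :=
  forall x y, connect r x y.

Definition biconnected_rel (A : finType) (r : rel A) : Prop :=
  connected_rel r /\
  forall z x y, x != z -> y != z -> connect (avoid r [set z]) x y.

Definition simple_path (A : finType) (r : rel A) (u : A) (p : seq A) (v : A) : bool :=
  [&& path r u p, last u p == v & uniq (u :: p)].

Definition balanced_separator (R : numDomainType) (A : finType) (r : rel A)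
    (w : A -> R) (c : R) (S : {set A}) : Prop :=
  forall x, x \notin S ->
    (\sum_(y | (y \notin S) && connect (avoid r S) x y) w y <= c * \sum_y w y)%R.

Section Map.
Variables (D V F : finType).
(* e : edge involution on darts, n : rotation (successor around a vertex),
   faces are the orbits of the face permutation  x |-> n (e x). *)
Variables (e n : D -> D) (vert : D -> V) (fc : D -> F).

Definition face_perm (x : D) : D := n (e x).

Definition is_planar_map : Prop :=
  [/\ injective n,
      (forall x, e (e x) = x) /\ (forall x, e x != x),
      (forall x y, (vert x == vert y) = fconnect n x y) /\ (forall v, exists x, vert x = v),
      (forall x y, (fc x == fc y) = fconnect face_perm x y) /\ (forall f, exists x, fc x = f)
    & (* Euler's formula: genus 0 *)
      (#|V| + #|F| = #|D| %/ 2 + 2)%N ].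

Definition adjE (T : {set D}) : rel V :=
  fun x y => [exists d in T, (vert d == x) && (vert (e d) == y)].

Definition adjG : rel V := adjE [set: D].

(* T (a set of darts closed under e) is a spanning tree: connected and
   acyclic, acyclicity expressed as "every tree edge is a bridge of T". *)
Definition spanning_tree (T : {set D}) : Prop :=
  [/\ forall d, (e d \in T) = (d \in T),
      connected_rel (adjE T)
    & forall d, d \in T ->
        ~~ connect (adjE (T :\ d :\ e d)) (vert d) (vert (e d))].

Definition adj_cotree (T : {set D}) : rel F :=
  fun g h => [exists d, [&& d \notin T, fc d == g & fc (e d) == h]].

(* T^*_f, for T^* rooted at rt : the nodes g whose path to the root
   passes through f (every walk from g to rt in T^* visits f). *)
Definition in_subtree (T : {set D}) (rt f g : F) : bool :=
  (g == f) || ~~ connect (avoid (adj_cotree T) [set f]) g rt.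

Definition child (T : {set D}) (rt f h : F) : bool :=
  [&& adj_cotree T f h, in_subtree T rt f h & h != f].

(* a dart of the primal edge dual to the tree edge (f, parent f) *)
Definition parent_dart (T : {set D}) (rt f : F) (d : D) : bool :=
  [&& d \notin T, fc d == f & ~~ in_subtree T rt f (fc (e d))].

Variable R : realFieldType.

Definition wF (wV : V -> R) (tf : V -> F) (g : F) : R :=
  \sum_(x | tf x == g) wV x.

Definition wsub (T : {set D}) (rt : F) (w : F -> R) (f : F) : R :=
  \sum_(g | in_subtree T rt f g) w g.

Definition balanced_node (T : {set D}) (rt : F) (w : F -> R) (a b : R) (f : F) : Prop :=
  (a * \sum_g w g <= wsub T rt w f)%R /\ (wsub T rt w f <= b * \sum_g w g)%R.

Definition critical_node (T : {set D}) (rt : F) (w : F -> R) (a b : R) (f : F) : Prop :=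
  (b * \sum_g w g < wsub T rt w f)%R /\
  forall h, child T rt f h -> (wsub T rt w h < a * \sum_g w g)%R.

End Map.

(* Main.v *)
Require Import Defs.
From mathcomp Require Import all_boot all_order all_algebra zify.
From mathcomp.algebra_tactics Require Import ring lra.
Import Order.TTheory GRing.Theory Num.Theory.
Set Implicit Arguments. Unset Strict Implicit. Unset Printing Implicit Defensive.
Lemma avoid_sub (A : finType) (r : rel A) (S S' : {set A}) x y :
  S \subset S' -> connect (avoid r S') x y -> connect (avoid r S) x y.
Proof.
move=> sub; apply: connect_sub => a b /and3P [aS bS rab]; apply: connect1.
apply/and3P; split=> //; apply/negP => h.
  by rewrite (subsetP sub _ h) in aS.
by rewrite (subsetP sub _ h) in bS.
Qed.

Lemma avoid_subr (A : finType) (r r' : rel A) (S : {set A}) x y :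
  subrel r r' -> connect (avoid r S) x y -> connect (avoid r' S) x y.
Proof.
move=> sub; apply: connect_sub => a b /and3P [aS bS rab]; apply: connect1.
by apply/and3P; split=> //; apply: sub.
Qed.

Lemma avoid_start (A : finType) (r : rel A) (S : {set A}) x y :
  connect (avoid r S) x y -> x \in S -> x = y.
Proof.
case/connectP=> [[|z p]] /=; first by move=> _ ->.
by case/andP=> /and3P [xS _ _] _ _ xS'; rewrite xS' in xS.
Qed.

Lemma avoid_sym (A : finType) (r : rel A) (S : {set A}) :
  symmetric r -> connect_sym (avoid r S).
Proof.
move=> sr; apply: sym_connect_sym => a b; rewrite /avoid sr.
by case: (a \in S); case: (b \in S).
Qed.

Lemma connect_avoid_exit (A : finType) (r : rel A) (S : {set A}) a g :
  connect r a g -> g \notin S ->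
  connect (avoid r S) a g \/
  exists s b, [/\ s \in S, r s b, b \notin S & connect (avoid r S) b g].
Proof.
case/connectP=> p pth ->; elim: p a pth => [|b p IH] a /=.
  by move=> _ _; left; exact: connect0.
case/andP=> rab pth gS; case: (IH b pth gS) => [cb|]; last by right.
have bS : b \notin S.
  apply/negP=> bS; have := avoid_start cb bS => eb.
  by rewrite -eb bS in gS.
case aS: (a \in S).
  by right; exists a, b.
left; apply: connect_trans cb; apply: connect1.
by rewrite /avoid aS bS rab.
Qed.

Notation "\xor_ ( i | P ) F" := (\big[addb/false]_(i | P) F)
  (at level 41, F at level 41, i at level 50).

Lemma xor_pair (I : finType) (P : pred I) (g : I -> bool) (f : I -> I) :
  involutive f -> (forall i, f i != i) -> (forall i, P (f i) = P i) ->
  (forall i, g (f i) = g i) -> \xor_(i | P i) g i = false.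
Proof.
move=> fK fn Pf gf.
have finj : injective f := inv_inj fK.
pose r := fun i : I => nat_of_ord (enum_rank i).
rewrite (bigID (fun i => r i < r (f i))) /=.
rewrite [X in addb _ X](reindex_inj finj) /=.
rewrite [X in addb _ X](eq_bigl (fun i => P i && (r i < r (f i)))).
  rewrite [X in addb _ X](eq_bigr g); first by rewrite addbb.
  by move=> i _; rewrite gf.
move=> i; rewrite Pf fK; congr andb.
have : r (f i) != r i.
  apply: contra (fn i) => /eqP h; apply/eqP.
  by apply: enum_rank_inj; apply: val_inj.
by move=> h; rewrite -leqNgt leq_eqVlt eq_sym (negbTE h).
Qed.

Lemma xor_true (I : finType) (P : pred I) : \xor_(i | P i) true = odd #|P|.
Proof.
by rewrite big_const; elim: #|P| => //= k ->.
Qed.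

Lemma xor_split (I : finType) (P : pred I) (g1 g2 : I -> bool) :
  \xor_(i | P i) (g1 i (+) g2 i) = \xor_(i | P i) g1 i (+) \xor_(i | P i) g2 i.
Proof. exact: big_split. Qed.

Lemma xor_cond (I : finType) (P : pred I) (g : I -> bool) :
  \xor_(i | P i) g i = \xor_(i | true) (P i && g i).
Proof. by rewrite big_mkcond; apply: eq_bigr => i _; case: (P i). Qed.

Lemma xor_one (I : finType) (a : I) (c : bool) :
  \xor_(i | true) ((i == a) && c) = c.
Proof.
rewrite (bigD1 a) //= eqxx /= big1 ?addbF // => i /negbTE ->; done.
Qed.

Lemma xor_two (I : finType) (a b : I) (ca cb : bool) : a != b ->
  \xor_(i | true) (((i == a) && ca) || ((i == b) && cb)) = ca (+) cb.
Proof.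
move=> ab.
have -> : ca (+) cb = \xor_(i | true) ((i == a) && ca) (+) \xor_(i | true) ((i == b) && cb).
  by rewrite !xor_one.
rewrite -xor_split; apply: eq_bigr => i _.
case: (eqVneq i a) => [->|ia] /=; last by case: (i == b); case: cb.
by rewrite (negbTE ab); case: ca.
Qed.

Section RealSums.
Variable R : realFieldType.
Local Open Scope ring_scope.

Lemma sum_sub (I : finType) (P Q : pred I) (w : I -> R) :
  (forall i, 0 <= w i) -> (forall i, P i -> Q i) ->
  \sum_(i | P i) w i <= \sum_(i | Q i) w i.
Proof.
move=> w0 PQ; rewrite [X in _ <= X](bigID P) /=.
rewrite (eq_bigl (fun i => Q i && P i)); last first.
  by move=> i; case Pi: (P i); rewrite ?andbF ?andbT // PQ.
by rewrite lerDl sumr_ge0.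
Qed.

Lemma sum_union (I : finType) (P Q1 Q2 : pred I) (w : I -> R) :
  (forall i, 0 <= w i) -> (forall i, P i -> Q1 i || Q2 i) ->
  \sum_(i | P i) w i <= \sum_(i | Q1 i) w i + \sum_(i | Q2 i) w i.
Proof.
move=> w0 PQ; apply: le_trans (sum_sub w0 PQ) _.
rewrite (bigID Q1) /=; apply: lerD.
  by apply: sum_sub => // i /andP [].
apply: sum_sub => // i /andP [Pi nQ1].
by case/orP: Pi => h //; rewrite h in nQ1.
Qed.

Lemma sum_compl (I : finType) (P : pred I) (w : I -> R) :
  \sum_(i | ~~ P i) w i = \sum_i w i - \sum_(i | P i) w i.
Proof. by rewrite [X in _ = X - _](bigID P) /= addrC addrK. Qed.

End RealSums.
Section Comps.
Variables (W D : finType) (h : D -> W) (e : D -> D).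
Hypothesis eK : involutive e.
Hypothesis en : forall y, e y != y.

Definition adjH (M : {set D}) : rel W :=
  fun a b => [exists y in M, (h y == a) && (h (e y) == b)].
Definition eclosed (M : {set D}) := forall y, (e y \in M) = (y \in M).
Definition cls (M : {set D}) (x : W) : {set W} := [set z | connect (adjH M) x z].
Definition ncomp (M : {set D}) := #|[set cls M x | x : W]|.

Lemma adjH_sym M : eclosed M -> symmetric (adjH M).
Proof.
move=> cM a b; apply/existsP/existsP => [] [y /and3P [yM /eqP <- /eqP <-]];
  by exists (e y); rewrite cM yM eK !eqxx.
Qed.

Lemma connect_symH M : eclosed M -> connect_sym (adjH M).
Proof. by move=> cM; apply: sym_connect_sym; apply: adjH_sym. Qed.

Lemma adjH_mono (M M' : {set D}) : M \subset M' -> subrel (adjH M) (adjH M').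
Proof.
move=> sub a b /existsP [y /andP [yM hh]]; apply/existsP; exists y.
by rewrite (subsetP sub _ yM).
Qed.

Lemma cls_eq M x z : eclosed M -> connect (adjH M) x z -> cls M x = cls M z.
Proof.
move=> cM cxz; apply/setP => w; rewrite !inE; apply/idP/idP => c.
  by apply: connect_trans c; rewrite connect_symH.
exact: connect_trans c.
Qed.

Section Remove.
Variables (M : {set D}) (y : D).
Hypothesis cM : eclosed M.
Hypothesis yM : y \in M.
Local Notation M' := (M :\ y :\ e y).
Let a := h y.
Let b := h (e y).
Local Notation c' := (connect (adjH M')).

Lemma cM' : eclosed M'.
Proof.
have ee : forall u v, (e u == v) = (u == e v).
  by move=> u v; apply/eqP/eqP => [<-|->]; rewrite eK.
move=> z; rewrite !inE cM !ee eK.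
by case: (z == y); case: (z == e y).
Qed.

Lemma subM' : M' \subset M.
Proof. by apply/subsetP => z; rewrite !inE => /and3P []. Qed.

Lemma connect_remove x z :
  connect (adjH M) x z =
  [|| c' x z, c' x a && c' b z | c' x b && c' a z].
Proof.
have symc := connect_symH cM'.
apply/idP/idP; last first.
  have sub := connect_sub (fun u v (huv : adjH M' u v) =>
     connect1 (adjH_mono subM' huv)).
  have hab : connect (adjH M) a b.
    by apply: connect1; apply/existsP; exists y; rewrite yM !eqxx.
  have hba : connect (adjH M) b a.
    by apply: connect1; apply/existsP; exists (e y); rewrite cM yM eK !eqxx.
  case/or3P => [/sub //|/andP [/sub h1 /sub h2]|/andP [/sub h1 /sub h2]].
    exact: connect_trans h1 (connect_trans hab h2).
  exact: connect_trans h1 (connect_trans hba h2).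
case/connectP => p pth ->; elim: p x pth => [|w p IH] x /=.
  by rewrite connect0.
case/andP => /existsP [d /and3P [dM /eqP hd /eqP hed]] pth.
have := IH _ pth; set l := last w p.
case dM': (d \in M').
  have cxw : c' x w by apply: connect1; apply/existsP; exists d; rewrite dM' hd hed !eqxx.
  case/or3P => [h1|/andP [h1 h2]|/andP [h1 h2]].
  - by rewrite (connect_trans cxw h1).
  - by rewrite (connect_trans cxw h1) h2 orbT.
  - by rewrite (connect_trans cxw h1) h2 !orbT.
move/negbT: dM'; rewrite !inE dM andbT negb_and !negbK => /orP [/eqP de|/eqP dy].
  have xb : x = b by rewrite -hd de.
  have wa : w = a by rewrite -hed de eK.
  rewrite xb wa !connect0 /=.
  by case/or3P => [->|->|/andP [_ ->]]; rewrite ?orbT.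
have xa : x = a by rewrite -hd dy.
have wb : w = b by rewrite -hed dy.
rewrite xa wb !connect0 /=.
by case/or3P => [->|/andP [_ ->]|->]; rewrite ?orbT.
Qed.

Lemma ncomp_remove_conn : c' a b -> ncomp M = ncomp M'.
Proof.
move=> cab; have symc := connect_symH cM'.
have E : forall x z, connect (adjH M) x z = c' x z.
  move=> x z; rewrite connect_remove; apply/idP/idP; last by move ->.
  have cba : c' b a by rewrite symc.
  case/or3P => [//|/andP [h1 h2]|/andP [h1 h2]].
    exact: connect_trans h1 (connect_trans cab h2).
  exact: connect_trans h1 (connect_trans cba h2).
rewrite /ncomp; suff -> : [set cls M x | x : W] = [set cls M' x | x : W] by [].
apply: eq_imset => x.
by apply/setP => z; rewrite !inE E.
Qed.

Lemma ncomp_remove_bridge : ~~ c' a b -> ncomp M' = (ncomp M).+1.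
Proof.
move=> nab; have symc := connect_symH cM'.
pose f (K : {set W}) := if (a \in K) || (b \in K) then cls M' a :|: cls M' b else K.
have E : forall x, cls M x = f (cls M' x).
  move=> x; apply/setP => z; rewrite /f !inE connect_remove.
  case: (boolP (c' x a)) => xa /=; rewrite ?inE.
    have ax : c' a x by rewrite symc.
    apply/idP/idP.
      case/or3P => [xz|->|/andP [_ ->]]; rewrite ?orbT //.
      by rewrite (connect_trans ax xz).
    by case/orP => [az|->]; rewrite ?orbT // (connect_trans xa az).
  case: (boolP (c' x b)) => xb /=; rewrite ?inE ?andbF ?orbF //.
  have bx : c' b x by rewrite symc.
  apply/idP/idP.
    case/orP => [xz|az]; first by rewrite (connect_trans bx xz) orbT.
    by rewrite az.
  case/orP => [az|bz]; first by rewrite az orbT.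
  by rewrite (connect_trans xb bz).
rewrite /ncomp.
have -> : [set cls M x | x : W] = [set f K | K in [set cls M' x | x : W]].
  by rewrite -imset_comp; apply: eq_imset => x; rewrite E.
set S := [set cls M' x | x : W].
have aS : cls M' a \in S by apply: imset_f.
have bS : cls M' b \in S by apply: imset_f.
have ab : cls M' a != cls M' b.
  apply: contra nab => /eqP e1; have : b \in cls M' a by rewrite e1 inE connect0.
  by rewrite inE.
have -> : [set f K | K in S] = [set f K | K in S :\ cls M' b].
  apply/setP => K; apply/imsetP/imsetP => [[K' K'S ->]|[K' /setD1P [_ K'S] ->]].
    case: (eqVneq K' (cls M' b)) => [eb|nb]; last by exists K'; rewrite // !inE nb.
    exists (cls M' a); first by rewrite !inE ab.
    by rewrite eb /f !inE !connect0 ?orbT.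
  by exists K'.
rewrite card_in_imset; first by rewrite (cardsD1 (cls M' b)) bS.
have clsS : forall K, K \in S -> exists x, K = cls M' x.
  by move=> K /imsetP [x _ ->]; exists x.
have inK : forall x w, (w \in cls M' x) -> cls M' x = cls M' w.
  by move=> x w; rewrite inE => xw; apply: cls_eq cM' xw.
move=> K1 K2 /setD1P [K1b K1S] /setD1P [K2b K2S].
case: (clsS _ K1S) => x1 e1; case: (clsS _ K2S) => x2 e2; subst K1 K2.
rewrite /f.
have side : forall x, cls M' x != cls M' b -> (a \in cls M' x) || (b \in cls M' x) ->
   cls M' x = cls M' a.
  move=> x nb /orP [ha|hb]; first exact: inK.
  by rewrite (inK _ _ hb) eqxx in nb.
case: ifP => h1; case: ifP => h2.
- by rewrite (side _ K1b h1) (side _ K2b h2).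
- move=> e1; move/negbT: h2; rewrite -e1 !inE !connect0 orbT //.
- move=> e1; move/negbT: h1; rewrite e1 !inE !connect0 orbT //.
- done.
Qed.

End Remove.

Lemma ncomp0 : ncomp set0 = #|W|.
Proof.
rewrite /ncomp card_imset //.
move=> x z /setP /(_ z); rewrite !inE connect0 => c.
case/connectP: c => [[|w p]] /=; first by move=> _ ->.
by case/andP => /existsP [d]; rewrite inE.
Qed.

Lemma ncomp_lower (M : {set D}) : eclosed M -> (#|W| * 2 <= ncomp M * 2 + #|M|)%N.
Proof.
have [m sM] : exists m, (#|M| <= m)%N by exists #|M|.
elim: m M sM => [|m IH] M.
  rewrite leqn0 => /eqP /cards0_eq -> _; by rewrite ncomp0 cards0 addn0.
move=> sM cM; case: (set_0Vmem M) => [->|[y yM]]; first by rewrite ncomp0 cards0 addn0.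
have cM2 := cM' y cM.
have card : #|M| = (#|M :\ y :\ e y|).+2.
  rewrite (cardsD1 y M) yM (cardsD1 (e y) (M :\ y)) !inE cM yM en.
  by rewrite add1n.
have sM' : (#|M :\ y :\ e y| <= m)%N by move: sM; rewrite card; lia.
have IH2 := IH _ sM' cM2.
case: (boolP (connect (adjH (M :\ y :\ e y)) (h y) (h (e y)))) => c.
  have E := ncomp_remove_conn cM yM c; rewrite card; lia.
have E := ncomp_remove_bridge cM yM c; rewrite card; lia.
Qed.

Lemma ncomp_forest (M : {set D}) : eclosed M ->
  (forall y, y \in M -> ~~ connect (adjH (M :\ y :\ e y)) (h y) (h (e y))) ->
  (#|W| * 2 = ncomp M * 2 + #|M|)%N.
Proof.
have [m sM] : exists m, (#|M| <= m)%N by exists #|M|.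
elim: m M sM => [|m IH] M.
  rewrite leqn0 => /eqP /cards0_eq -> _ _; by rewrite ncomp0 cards0 addn0.
move=> sM cM br; case: (set_0Vmem M) => [->|[y yM]]; first by rewrite ncomp0 cards0 addn0.
have cM2 := cM' y cM.
have card : #|M| = (#|M :\ y :\ e y|).+2.
  rewrite (cardsD1 y M) yM (cardsD1 (e y) (M :\ y)) !inE cM yM en.
  by rewrite add1n.
have br' : forall z, z \in M :\ y :\ e y ->
   ~~ connect (adjH (M :\ y :\ e y :\ z :\ e z)) (h z) (h (e z)).
  move=> z zM'; have zM : z \in M by move: zM'; rewrite !inE => /and3P [].
  apply: contra (br z zM); apply: connect_sub => u v huv; apply: connect1.
  apply: adjH_mono huv; apply/subsetP => w; rewrite !inE.
  by case/and5P => -> -> _ _ ->.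
have E := ncomp_remove_bridge cM yM (br y yM).
have sM' : (#|M :\ y :\ e y| <= m)%N by move: sM; rewrite card; lia.
have IH2 := IH _ sM' cM2 br'.
rewrite card; lia.
Qed.

End Comps.
Section MapP.
Variables (D V F : finType) (e n : D -> D) (vert : D -> V) (fc : D -> F).
Hypothesis pm : is_planar_map e n vert fc.

Local Notation phi := (face_perm e n).

Lemma pn_inj : injective n. Proof. by case: pm. Qed.
Lemma peK : involutive e. Proof. by case: pm => _ [h _]. Qed.
Lemma pe_neq y : e y != y. Proof. by case: pm => _ [_ h]. Qed.
Lemma pvert x y : (vert x == vert y) = fconnect n x y. Proof. by case: pm => _ _ [h _]. Qed.
Lemma pvert_surj v : exists x, vert x = v. Proof. by case: pm => _ _ [_ h]. Qed.
Lemma pfc x y : (fc x == fc y) = fconnect phi x y. Proof. by case: pm => _ _ _ [h _]. Qed.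
Lemma pfc_surj f : exists x, fc x = f. Proof. by case: pm => _ _ _ [_ h]. Qed.
Lemma peuler : (#|V| + #|F| = #|D| %/ 2 + 2)%N. Proof. by case: pm. Qed.

Lemma pe_inj : injective e. Proof. exact: inv_inj peK. Qed.
Lemma phi_inj : injective phi.
Proof. by move=> x y /pn_inj /pe_inj. Qed.

Lemma vert_n y : vert (n y) = vert y.
Proof. by apply/eqP; rewrite eq_sym pvert; apply: fconnect1. Qed.

Lemma fc_phi y : fc (phi y) = fc y.
Proof. by apply/eqP; rewrite eq_sym pfc; apply: fconnect1. Qed.

Lemma phi_e y : phi (e y) = n y.
Proof. by rewrite /face_perm peK. Qed.

Lemma vert_phi z : vert (phi z) = vert (e z).
Proof. by rewrite /face_perm vert_n. Qed.

Lemma fc_iter i z : fc (iter i phi z) = fc z.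
Proof. by elim: i => //= i IH; rewrite fc_phi. Qed.

Lemma vert_conn (s : D -> bool) y y' :
  (forall z, vert z = vert y -> s (n z) = s z) -> vert y' = vert y -> s y' = s y.
Proof.
move=> sn /eqP; rewrite eq_sym pvert => /connectP [p pth ->].
elim: p y pth sn => [|z p IH] y //= /andP [/eqP <-] pth sn.
rewrite (IH (n y) pth) ?sn //.
by move=> z' hz; apply: sn; rewrite hz vert_n.
Qed.

Lemma parity_vertex (s : D -> bool) x :
  \xor_(y | vert y == x) (s y != s (e y)) =
  \xor_(z | vert (phi z) == x) (s z != s (phi z)).
Proof.
rewrite [RHS](reindex_inj pe_inj) /=.
rewrite [RHS](eq_bigl (fun y => vert y == x)); last by move=> y; rewrite phi_e vert_n.
rewrite [RHS](eq_bigr (fun y => s (e y) != s (n y))); last by move=> y _; rewrite phi_e.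
suff : \xor_(y | vert y == x) (s y != s (e y)) (+) \xor_(y | vert y == x) (s (e y) != s (n y)) = false.
  by case: (\xor_(y | vert y == x) (s y != s (e y)));
     case: (\xor_(y | vert y == x) (s (e y) != s (n y))).
rewrite -xor_split.
rewrite (eq_bigr (fun y => s y (+) s (n y))); last first.
  by move=> y _; case: (s y); case: (s (e y)); case: (s (n y)).
rewrite xor_split [X in X (+) _](reindex_inj pn_inj) /=.
rewrite [X in X (+) _](eq_bigl (fun y => vert y == x)); last by move=> y; rewrite vert_n.
by rewrite addbb.
Qed.

Lemma adjE_H (M : {set D}) : adjE e vert M = adjH vert e M.
Proof. by []. Qed.

Section Sep.
Variables (T : {set D}) (s : D -> bool) (u v : V).
Hypothesis Tcl : forall d, (e d \in T) = (d \in T).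
Hypothesis Tbr : forall d, d \in T ->
  ~~ connect (adjE e vert (T :\ d :\ e d)) (vert d) (vert (e d)).
Hypothesis H3 : forall x,
  \xor_(y | (vert y == x) && (y \notin T)) (s y != s (e y)) (+)
  \xor_(z | vert (phi z) == x) (s z != s (phi z)) = (x == u) (+) (x == v).

Lemma tree_parity x :
  \xor_(y | (vert y == x) && (y \in T)) (s y != s (e y)) = (x == u) (+) (x == v).
Proof.
rewrite -H3 -parity_vertex [X in _ (+) X](bigID (fun y => y \in T)) /=.
by case: (\xor_(y | (vert y == x) && (y \in T)) (s y != s (e y)));
   case: (\xor_(y | (vert y == x) && (y \notin T)) (s y != s (e y))).
Qed.

Lemma tree_cross t : t \in T -> s t != s (e t) ->
  connect (adjE e vert (T :\ t :\ e t)) (vert t) u !=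
  connect (adjE e vert (T :\ t :\ e t)) (vert t) v.
Proof.
move=> tT ct; set c := connect (adjE e vert (T :\ t :\ e t)) (vert t).
have TclT : eclosed e T := Tcl.
have cl' : eclosed e (T :\ t :\ e t) := cM' peK t TclT.
have key : \xor_(x | c x) ((x == u) (+) (x == v)) = c u (+) c v.
  rewrite xor_split [X in X (+) _]xor_cond [X in _ (+) X]xor_cond.
  rewrite (eq_bigr (fun x => (x == u) && c u)); last first.
    by move=> x _; case: eqP => [->|]; rewrite ?andbF ?andbT.
  rewrite [X in _ (+) X](eq_bigr (fun x => (x == v) && c v)); last first.
    by move=> x _; case: eqP => [->|]; rewrite ?andbF ?andbT.
  by rewrite !xor_one.
suff : \xor_(x | c x) ((x == u) (+) (x == v)) = true.
  by rewrite key; case: (c u); case: (c v).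
rewrite (eq_bigr (fun x => \xor_(y | ((y \in T) && c (vert y)) && (vert y == x))
    (s y != s (e y)))); last first.
  move=> x cx; rewrite -tree_parity; apply: eq_bigl => y.
  by case: (eqVneq (vert y) x) => [->|]; rewrite ?cx ?andbT ?andbF // andbC.
rewrite -(partition_big vert (fun x => c x)
   (P := fun y => (y \in T) && c (vert y))
   (F := fun y => s y != s (e y))); last by move=> y /andP [].
have ctv : c (vert t) by apply: connect0.
have nce : ~~ c (vert (e t)) by apply: Tbr.
rewrite (bigD1 t) /=; last by rewrite tT ctv.
rewrite ct /= (@xor_pair _ _ _ e) //.
- exact: peK.
- exact: pe_neq.
- have imp : forall y, ((y \in T) && c (vert y)) && (y != t) ->
      ((e y \in T) && c (vert (e y))) && (e y != t).
    move=> y /andP [/andP [yT cy] yt].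
    have yet : y != e t by apply: contra nce => /eqP <-.
    have yT' : y \in T :\ t :\ e t by rewrite !inE yT yt yet.
    rewrite Tcl yT /=; apply/andP; split.
      apply: connect_trans cy (connect1 _); apply/existsP; exists y.
      by rewrite yT' !eqxx.
    by apply: contra yet => /eqP <-; rewrite peK.
  move=> y; apply/idP/idP => [/imp|/imp]; last by [].
  by rewrite peK.
- by move=> y; rewrite peK eq_sym.
Qed.

Lemma tree_cross_path t p : t \in T -> s t != s (e t) ->
  path (adjE e vert T) u p -> last u p = v ->
  vert t \in u :: p /\ vert (e t) \in u :: p.
Proof.
move=> tT ct pth lst.
have := tree_cross tT ct; set c := connect _ (vert t) => cuv.
have TclT : eclosed e T := Tcl.
have cl' : eclosed e (T :\ t :\ e t) := cM' peK t TclT.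
have csym := connect_symH vert peK cl'.
rewrite -lst in cuv; elim: p u pth cuv {lst} => [|w p IH] x /=.
  by rewrite eqxx.
case/andP => axw pth cxl.
case: (boolP (c x == c w)) => [/eqP cxw|nxw].
  rewrite cxw in cxl; case: (IH _ pth cxl) => h1 h2.
  by split; rewrite inE ?h1 ?h2 orbT.
case/existsP: axw => d /and3P [dT /eqP dx /eqP dw].
case: (boolP (d \in T :\ t :\ e t)) => dT'.
  have a' : adjE e vert (T :\ t :\ e t) x w.
    by apply/existsP; exists d; rewrite dT' dx dw !eqxx.
  suff ee : c x = c w by rewrite ee eqxx in nxw.
  apply/idP/idP => h.
    exact: connect_trans h (connect1 a').
  apply: connect_trans h _; rewrite csym; exact: connect1.
move: dT'; rewrite !inE dT andbT negb_and !negbK => /orP [/eqP de|/eqP dt].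
  rewrite de peK in dw; rewrite de in dx.
  by split; rewrite -dx -dw ?inE !eqxx ?orbT.
rewrite dt in dx dw.
by split; rewrite -dx -dw ?inE !eqxx ?orbT.
Qed.

Hypothesis Hnt : forall y, y \notin T -> s y != s (e y) -> vert y = u \/ vert y = v.
Hypothesis Hco : forall z, s z != s (phi z) -> vert (phi z) = u \/ vert (phi z) = v.

Variable p : seq V.
Hypothesis pth : path (adjE e vert T) u p.
Hypothesis lst : last u p = v.

Lemma uP : u \in u :: p. Proof. by rewrite inE eqxx. Qed.
Lemma vP : v \in u :: p. Proof. by rewrite -lst mem_last. Qed.

Lemma side_const y : vert y \notin u :: p -> s (e y) = s y /\ s (n y) = s y.
Proof.
move=> yP.
have cr : s y = s (e y).
  apply/eqP; apply/negP => /negP cy.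
  case: (boolP (y \in T)) => yT.
    by case: (tree_cross_path yT cy pth lst) => h _; rewrite h in yP.
  by case: (Hnt yT cy) => h; rewrite h ?uP ?vP in yP.
have co : s (e y) = s (phi (e y)).
  apply/eqP; apply/negP => /negP cy.
  by case: (Hco cy); rewrite vert_phi peK => h; rewrite h ?uP ?vP in yP.
by rewrite -phi_e -co -cr.
Qed.

Lemma side_vertex y y' : vert y \notin u :: p -> vert y' = vert y -> s y' = s y.
Proof.
move=> yP; apply: vert_conn => z hz.
by case: (side_const (y := z) _) => //; rewrite hz.
Qed.

Lemma side_component y y' :
  vert y \notin u :: p ->
  connect (avoid (adjG e vert) [set x in u :: p]) (vert y) (vert y') -> s y' = s y.
Proof.
move=> yP /connectP [q qp lq].
elim: q y yP qp lq => [|w q IH] y yP /=.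
  by move=> _ lq; exact: side_vertex yP lq.
case/andP => /and3P [_ wS /existsP [d /andP [_ /andP [/eqP dy /eqP dw]]]] qp lq.
have wP : w \notin u :: p by move: wS; rewrite inE.
have sd : s d = s y by apply: side_vertex yP dy.
have sed : s (e d) = s d.
  by case: (side_const (y := d) _) => //; rewrite dy.
rewrite (IH (e d)) ?dw //; first by rewrite sed.
Qed.

Local Open Scope ring_scope.
Variables (R : realFieldType) (wV : V -> R) (c : R).
Hypothesis w0 : forall x, 0 <= wV x.
Hypothesis bound : forall b : bool,
  \sum_(x | (x \notin u :: p) && [exists y, (vert y == x) && (s y == b)]) wV x
    <= c * \sum_x wV x.

Lemma separator : balanced_separator (adjG e vert) wV c [set x in u :: p].
Proof.
move=> x; rewrite inE => xP.
case: (pvert_surj x) => y0 hy0.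
apply: le_trans (bound (s y0)); apply: sum_sub => // z /andP [zS cz].
move: zS; rewrite inE => zP; rewrite zP /=.
case: (pvert_surj z) => y1 hy1; apply/existsP; exists y1; rewrite hy1 eqxx /=.
apply/eqP; apply: side_component; first by rewrite hy0.
by rewrite hy0 hy1.
Qed.

End Sep.

Lemma ncomp_conn (W : finType) (M : {set D}) (h : D -> W) (w0 : W) :
  (forall x z, connect (adjH h e M) x z) -> ncomp h e M = 1%N.
Proof.
move=> hc; rewrite /ncomp.
have -> : [set cls h e M x | x : W] = [set setT].
  apply/setP => K; rewrite inE; apply/imsetP/eqP => [[x _ ->]|->].
    by apply/setP => z; rewrite !inE hc.
  by exists w0 => //; apply/setP => z; rewrite !inE hc.
exact: cards1.
Qed.

Lemma card_even : odd #|D| = false.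
Proof.
rewrite -(xor_true (fun _ : D => true)).
by apply: (xor_pair (f := e)) => //; [exact: peK | exact: pe_neq].
Qed.

Section Tree.
Variable T : {set D}.
Hypothesis ST : spanning_tree e vert T.
Hypothesis Gconn : connected_rel (adjG e vert).

Lemma Tcl d : (e d \in T) = (d \in T). Proof. by case: ST. Qed.
Lemma Tconn : connected_rel (adjE e vert T). Proof. by case: ST. Qed.
Lemma Tbr d : d \in T -> ~~ connect (adjE e vert (T :\ d :\ e d)) (vert d) (vert (e d)).
Proof. by case: ST => _ _ h; apply: h. Qed.

Local Notation cot := (adj_cotree e fc T).

Lemma cot_H : cot =2 adjH fc e (~: T).
Proof.
move=> g h; apply/existsP/existsP => [[d /and3P [dT dg dh]]|[d]].
  by exists d; rewrite inE dT dg dh.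
by rewrite inE => /and3P [dT dg dh]; exists d; rewrite dT dg dh.
Qed.

Lemma cot_sym : symmetric cot.
Proof.
move=> g h; rewrite !cot_H; apply: adjH_sym; first exact: peK.
by move=> y; rewrite !inE Tcl.
Qed.

Lemma cot_edge y : y \notin T -> cot (fc y) (fc (e y)).
Proof. by move=> yT; apply/existsP; exists y; rewrite yT !eqxx. Qed.

Lemma const_side (s : D -> bool) :
  (forall y, s (e y) = s y) -> (forall y, s (n y) = s y) -> forall y y', s y' = s y.
Proof.
move=> se sn y y'; have := Gconn (vert y) (vert y').
case/connectP => q qp lq; elim: q y qp lq => [|w q IH] y /=.
  by move=> _ lq; apply: vert_conn.
case/andP => /existsP [d /andP [_ /andP [/eqP dy /eqP dw]]] qp lq.
have sd : s d = s y by apply: vert_conn dy.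
by rewrite (IH (e d)) ?dw // se.
Qed.

Lemma cot_conn g h : connect cot g h.
Proof.
pose s y := connect cot g (fc y).
have snt : forall y, y \notin T -> s (e y) = s y.
  move=> y yT; apply/idP/idP => hs.
    apply: connect_trans hs (connect1 _); rewrite cot_sym; exact: cot_edge.
  exact: connect_trans hs (connect1 (cot_edge yT)).
have sphi : forall z, s (phi z) = s z by move=> z; rewrite /s fc_phi.
case: (pfc_surj g) => y0 fy0.
pose x0 := vert y0.
have H3 : forall x,
  \xor_(y | (vert y == x) && (y \notin T)) (s y != s (e y)) (+)
  \xor_(z | vert (phi z) == x) (s z != s (phi z)) = (x == x0) (+) (x == x0).
  move=> x; rewrite addbb big1 ?big1 //.
    by move=> z _; rewrite sphi eqxx.
  by move=> y /andP [_ yT]; rewrite snt // eqxx.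
have se : forall y, s (e y) = s y.
  move=> y; case: (boolP (y \in T)) => yT; last exact: snt.
  apply/eqP; rewrite eq_sym; apply/negP => /negP ct.
  by have := tree_cross Tcl Tbr H3 yT ct; rewrite eqxx.
have sn : forall y, s (n y) = s y by move=> y; rewrite -phi_e sphi se.
case: (pfc_surj h) => y1 fy1.
have := const_side se sn y0 y1; rewrite /s fy0 fy1 => ->; exact: connect0.
Qed.

Lemma cot_bridge y : y \notin T ->
  ~~ connect (adjH fc e (~: T :\ y :\ e y)) (fc y) (fc (e y)).
Proof.
move=> yT; apply/negP => c.
have clM : eclosed e (~: T) by move=> z; rewrite !inE Tcl.
have yM : y \in ~: T by rewrite inE.
have E1 := ncomp_remove_conn peK clM yM c.
have [v0 _] := pvert_surj (vert y).
have n1 : ncomp fc e (~: T) = 1%N.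
  apply: (ncomp_conn (fc y)) => x z; rewrite -(eq_connect cot_H); exact: cot_conn.
have L := ncomp_lower fc peK pe_neq (cM' peK y clM).
have Tc : (#|V| * 2 = 1 * 2 + #|T|)%N.
  have := ncomp_forest peK pe_neq (M := T) Tcl Tbr.
  by rewrite (ncomp_conn (vert y) Tconn).
have cM : #|~: T| = (#|~: T :\ y :\ e y|).+2.
  rewrite (cardsD1 y) yM (cardsD1 (e y) (~: T :\ y)) !inE Tcl yT pe_neq.
  by rewrite add1n.
have cC := cardsC T.
have eu := peuler.
have ev : (#|D| %% 2 = 0)%N by rewrite modn2 card_even.
rewrite -E1 n1 in L.
lia.
Qed.

Lemma cot_sub (y : D) (S : {set F}) : y \notin T ->
  (fc y \in S) || (fc (e y) \in S) ->
  subrel (avoid cot S) (adjH fc e (~: T :\ y :\ e y)).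
Proof.
move=> yT hS g h /and3P [gS hS' /existsP [d /and3P [dT /eqP dg /eqP dh]]].
have dy : d != y.
  by apply/eqP => dd; move: hS; rewrite -dd dg dh (negbTE gS) (negbTE hS').
have dey : d != e y.
  apply/eqP => dd; have yd : y = e d by rewrite dd peK.
  by move: hS; rewrite yd peK dg dh (negbTE gS) (negbTE hS').
by apply/existsP; exists d; rewrite !inE dT dy dey dg dh !eqxx.
Qed.

Lemma no_dual_loop y : y \notin T -> fc (e y) != fc y.
Proof.
move=> yT; apply/negP => /eqP E; have := cot_bridge yT.
by rewrite E connect0.
Qed.

Lemma two_edges y z (S : {set F}) : y \notin T -> z \notin T ->
  fc z = fc y -> fc y \in S -> z != y -> z != e y ->
  connect (avoid cot S) (fc (e z)) (fc (e y)) -> False.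
Proof.
move=> yT zT fz fS zy zey c; move/negP: (cot_bridge yT); apply.
apply: (connect_trans (y := fc (e z))).
  apply: connect1; apply/existsP; exists z; rewrite !inE zy zey zT fz !eqxx.
  done.
apply: connect_sub c => a b hab; apply: connect1; apply: cot_sub hab => //.
by rewrite fS.
Qed.


Local Open Scope ring_scope.
Variables (rt : F) (R : realFieldType) (wV : V -> R) (tf : V -> F).
Hypothesis w0 : forall x, 0 <= wV x.
Hypothesis tfH : forall x, exists d, vert d = x /\ fc d = tf x.

Local Notation sub := (in_subtree e fc T rt).
Local Notation wf := (wF wV tf).

Lemma wF_ge0 g : 0 <= wf g.
Proof. by apply: sumr_ge0 => x _. Qed.

Lemma sum_tf (P : pred F) : \sum_(x | P (tf x)) wV x = \sum_(g | P g) wf g.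
Proof.
rewrite (partition_big tf P) //; apply: eq_bigr => g Pg.
by apply: eq_bigl => x; case: eqP => [->|]; rewrite ?Pg ?andbF.
Qed.

Lemma sum_wf : \sum_g wf g = \sum_x wV x.
Proof. by rewrite -(sum_tf predT). Qed.

Lemma wsub_eq f : wsub e fc T rt wf f = \sum_(x | sub f (tf x)) wV x.
Proof. by rewrite sum_tf. Qed.

Lemma sub_refl f : sub f f.
Proof. by rewrite /in_subtree eqxx. Qed.

Lemma avoid_cot_sym (S : {set F}) : connect_sym (avoid cot S).
Proof. apply: avoid_sym; exact: cot_sym. Qed.

Lemma cot_avoid_edge y (S : {set F}) : y \notin T -> fc y \notin S -> fc (e y) \notin S ->
  avoid cot S (fc y) (fc (e y)).
Proof. by move=> yT h1 h2; rewrite /avoid h1 h2 cot_edge. Qed.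

Section Part1.
Variables (f : F) (d : D) (p : seq V).
Hypothesis bal : balanced_node e fc T rt wf (1/4) (3/4) f.
Hypothesis pd : parent_dart e fc T rt f d.
Hypothesis sp : simple_path (adjE e vert T) (vert d) p (vert (e d)).

Let s y := sub f (fc y).

Lemma pd_nT : d \notin T. Proof. by case/and3P: pd. Qed.
Lemma pd_f : fc d = f. Proof. by case/and3P: pd => _ /eqP. Qed.
Lemma pd_out : ~~ sub f (fc (e d)). Proof. by case/and3P: pd. Qed.

Lemma cross1 y : y \notin T -> s y -> ~~ s (e y) -> y = d.
Proof.
move=> yT sy sey.
have fey : fc (e y) != f by apply: contra sey; rewrite /s => /eqP ->; exact: sub_refl.
have cey : connect (avoid cot [set f]) (fc (e y)) rt.
  by move: sey; rewrite /s /in_subtree negb_or negbK (negbTE fey).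
have fy : fc y = f.
  case: (eqVneq (fc y) f) => // fyf; exfalso.
  move: sy; rewrite /s /in_subtree (negbTE fyf) /=.
  apply/negP; rewrite negbK; apply: connect_trans cey; apply: connect1.
  by apply: cot_avoid_edge; rewrite // inE.
case: (eqVneq y d) => // yd; exfalso.
have yed : y != e d.
  by apply: contra pd_out => /eqP <-; rewrite fy sub_refl.
have fed : fc (e d) != f.
  by apply: contra pd_out => /eqP ->; exact: sub_refl.
have ced : connect (avoid cot [set f]) (fc (e d)) rt.
  by move: pd_out; rewrite /in_subtree negb_or negbK (negbTE fed).
apply: (two_edges (y := d) (z := y) (S := [set f])) => //.
- exact: pd_nT.
- by rewrite fy pd_f.
- by rewrite pd_f inE.
- apply: connect_trans cey _; rewrite avoid_cot_sym; exact: ced.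
Qed.

Lemma cross1' y : y \notin T -> s y != s (e y) -> y = d \/ y = e d.
Proof.
move=> yT; case sy: (s y); case sey: (s (e y)) => //= _.
  by left; apply: cross1; rewrite ?sy ?sey.
right; rewrite -[y]peK; congr e.
apply: cross1; rewrite ?Tcl ?peK ?sy ?sey //.
Qed.

Lemma sd_true : s d. Proof. by rewrite /s pd_f sub_refl. Qed.
Lemma sed_false : s (e d) = false. Proof. by apply/negbTE; exact: pd_out. Qed.

Lemma H3_1 x :
  \xor_(y | (vert y == x) && (y \notin T)) (s y != s (e y)) (+)
  \xor_(z | vert (phi z) == x) (s z != s (phi z)) = (x == vert d) (+) (x == vert (e d)).
Proof.
rewrite [X in _ (+) X]big1; last by move=> z _; rewrite /s fc_phi eqxx.
rewrite addbF xor_cond.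
rewrite (eq_bigr (fun y => ((y == d) && (vert d == x)) || ((y == e d) && (vert (e d) == x)))).
  rewrite xor_two; last by rewrite eq_sym pe_neq.
  by rewrite ![x == _]eq_sym.
move=> y _; case: (eqVneq y d) => [->|yd] /=.
  have ne : (d == e d) = false by rewrite eq_sym; apply/negbTE/pe_neq.
  by rewrite pd_nT sd_true sed_false ne /= ?andbT ?orbF.
case: (eqVneq y (e d)) => [->|yed] /=.
  by rewrite Tcl pd_nT peK sd_true sed_false /= ?andbT ?orbF.
apply/negP => /andP [/andP [_ yT] cy].
by case: (cross1' yT cy) => h; [rewrite h eqxx in yd | rewrite h eqxx in yed].
Qed.

Lemma Hnt_1 y : y \notin T -> s y != s (e y) -> vert y = vert d \/ vert y = vert (e d).
Proof. by move=> yT cy; case: (cross1' yT cy) => ->; [left|right]. Qed.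

Lemma Hco_1 z : s z != s (phi z) -> vert (phi z) = vert d \/ vert (phi z) = vert (e d).
Proof. by rewrite /s fc_phi eqxx. Qed.

Lemma sp_path : path (adjE e vert T) (vert d) p. Proof. by case/and3P: sp. Qed.
Lemma sp_last : last (vert d) p = vert (e d). Proof. by case/and3P: sp => _ /eqP. Qed.

Lemma part1 : balanced_separator (adjG e vert) wV (3/4) [set x in vert d :: p].
Proof.
apply: (separator (s := s) Tcl Tbr H3_1 Hnt_1 Hco_1 sp_path sp_last w0) => b.
apply: le_trans (_ : \sum_(x | sub f (tf x) == b) wV x <= _).
  apply: sum_sub => // x /andP [xP /existsP [y /andP [/eqP yx /eqP sy]]].
  case: (tfH x) => y' [y'x fy'].
  have := side_vertex Tcl Tbr H3_1 Hnt_1 Hco_1 sp_path sp_last (y := y) (y' := y').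
  rewrite yx y'x => /(_ xP erefl) E.
  by rewrite -fy' -sy; apply/eqP; exact: E.
case: bal; rewrite sum_wf wsub_eq => lo hi.
case: b.
  by rewrite (eq_bigl (fun x => sub f (tf x))) // => x; rewrite eqb_id.
rewrite (eq_bigl (fun x => ~~ sub f (tf x))); last by move=> x; rewrite eqbF_neg.
rewrite sum_compl; lra.
Qed.

End Part1.

Lemma avoid_end (S : {set F}) a b : connect (avoid cot S) a b -> b \in S -> a = b.
Proof.
move=> c bS; rewrite avoid_cot_sym in c; by rewrite (avoid_start c bS).
Qed.

Lemma sub_rt g : sub rt g.
Proof.
rewrite /in_subtree; case: eqP => //= ne; apply/negP => c.
by apply: ne; apply: avoid_end c _; rewrite inE.
Qed.

Lemma wsub_rt : wsub e fc T rt wf rt = \sum_g wf g.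
Proof. by apply: eq_bigl => g; rewrite sub_rt. Qed.

Lemma sub_out f h : h != f -> ~~ sub f h -> connect (avoid cot [set f]) h rt.
Proof. by move=> hf; rewrite /in_subtree (negbTE hf) negbK. Qed.

Lemma sub_in f h : h != f -> sub f h -> ~~ connect (avoid cot [set f]) h rt.
Proof. by move=> hf; rewrite /in_subtree (negbTE hf). Qed.

Lemma avoid_in (r : rel F) (S : {set F}) : subrel (avoid r S) r.
Proof. by move=> a b /and3P []. Qed.

Lemma child_incl f h g : child e fc T rt f h -> sub h g -> sub f g.
Proof.
case/and3P => _ sfh hf; rewrite {1}/in_subtree.
case: (eqVneq g h) => [->|gh] //= ngr.
rewrite /in_subtree; case: (eqVneq g f) => //= gf; apply/negP => ca.
have nh := sub_in hf sfh.
have rth : rt != h by apply: contra nh => /eqP <-; exact: connect0.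
case: (connect_avoid_exit (r := avoid cot [set f]) (S := [set h]) ca _).
- by rewrite inE.
- move=> c; move/negP: ngr; apply; apply: (avoid_subr _ c); exact: avoid_in.
- move=> [s0 [b [s0h e1 _ c]]]; move: s0h; rewrite inE => /eqP s0h; subst s0.
  move/negP: nh; apply; apply: connect_trans (connect1 e1) _.
  apply: (connect_sub _ c) => x y hxy; apply: connect1; exact: (avoid_in hxy).
Qed.

Lemma child_not f h : child e fc T rt f h -> ~~ sub h f.
Proof.
case/and3P => _ sfh hf; rewrite /in_subtree eq_sym (negbTE hf) /= negbK.
have nh := sub_in hf sfh.
have rth : rt != h by apply: contra nh => /eqP <-; exact: connect0.
case: (eqVneq rt f) => [->|rtf]; first exact: connect0.
have := cot_conn h rt.
move/connect_avoid_exit => /(_ [set f; h]); rewrite !inE negb_or rtf rth.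
case=> // [c|[s0 [b [s0S e1 bS c]]]].
  by move: (avoid_start c); rewrite !inE eqxx orbT => /(_ erefl) /eqP; rewrite eq_sym (negbTE rth).
have sub1 : forall x, connect (avoid cot [set f; h]) b x -> forall S : {set F},
    S \subset [set f; h] -> connect (avoid cot S) b x.
  by move=> x cx S SS; apply: avoid_sub cx.
move: s0S bS; rewrite !inE negb_or => /orP [] /eqP es0 /andP [bf bh]; subst s0.
  apply: connect_trans (connect1 _) (sub1 _ c _ _).
    by rewrite /avoid !inE bh eq_sym (negbTE hf) e1.
  by apply/subsetP => x; rewrite !inE => ->; rewrite orbT.
exfalso; move/negP: nh; apply; apply: connect_trans (connect1 _) (sub1 _ c _ _).
  by rewrite /avoid !inE bf (negbTE hf) e1.
by apply/subsetP => x; rewrite !inE => ->.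
Qed.

Lemma W_ge0 : 0 <= \sum_x wV x.
Proof. by apply: sumr_ge0. Qed.

Lemma crit_exists : (~ exists f, balanced_node e fc T rt wf (1/4) (3/4) f) ->
  exists f, critical_node e fc T rt wf (1/4) (3/4) f.
Proof.
move=> nb; set Wt := \sum_g wf g.
have Wpos : 0 < Wt.
  rewrite lt_def; apply/andP; split; last by rewrite /Wt sum_wf W_ge0.
  apply/eqP => W0; apply: nb; exists rt; rewrite /balanced_node wsub_rt -/Wt W0.
  by rewrite !mulr0.
pose P k := [exists f, (3/4 * Wt < wsub e fc T rt wf f) && (#|[set g | sub f g]| == k)].
have exP : exists k, P k.
  exists #|[set g | sub rt g]|; apply/existsP; exists rt; rewrite eqxx andbT wsub_rt.
  rewrite -/Wt; lra.
case: (ex_minnP exP) => k /existsP [f /andP [hf /eqP kf]] mink.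
exists f; split => // h ch.
have hle : wsub e fc T rt wf h <= 3/4 * Wt.
  rewrite leNgt; apply/negP => hh.
  have : (k <= #|[set g | sub h g]|)%N by apply: mink; apply/existsP; exists h; rewrite hh eqxx.
  rewrite -kf; apply/negP; rewrite -ltnNge; apply: proper_card; apply/properP; split.
    by apply/subsetP => g; rewrite !inE; apply: child_incl.
  by exists f; rewrite !inE ?sub_refl // (negbTE (child_not ch)).
rewrite ltNge; apply/negP => lo; apply: nb; exists h; split => //.
Qed.

Section Part2.
Variable f : F.
Hypothesis crit : critical_node e fc T rt wf (1/4) (3/4) f.
Variable z0 : D.
Hypothesis fz0 : fc z0 = f.

Local Notation k := (order phi z0).
Local Notation idx := (findex phi z0).
Local Notation zi i := (iter i phi z0).
Local Notation av := (connect (avoid cot [set f])).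

Lemma f_conn y : (fc y == f) = fconnect phi z0 y.
Proof. by rewrite -fz0 eq_sym pfc. Qed.
Lemma idx_lt y : fc y = f -> (idx y < k)%N.
Proof. by move=> fy; apply: findex_max; rewrite -f_conn fy. Qed.
Lemma zi_idx y : fc y = f -> zi (idx y) = y.
Proof. by move=> fy; apply: iter_findex; rewrite -f_conn fy. Qed.
Lemma idx_zi i : (i < k)%N -> idx (zi i) = i.
Proof. exact: findex_iter. Qed.
Lemma zi_k : zi k = z0.
Proof. exact: (iter_order phi_inj). Qed.
Lemma fc_zi i : fc (zi i) = f.
Proof. by rewrite fc_iter. Qed.
Lemma zi_eq y m : (m < k)%N -> (fc y == f) && (idx y == m) = (y == zi m).
Proof.
move=> mk; apply/idP/eqP => [/andP [/eqP fy /eqP <-]|->].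
  by rewrite zi_idx.
by rewrite fc_zi idx_zi // !eqxx.
Qed.

Lemma av_not_f z g : z \notin T -> fc z = f -> av (fc (e z)) g -> g != f.
Proof.
move=> zT fz c; apply/eqP => gf; rewrite gf in c.
have := avoid_end c; rewrite inE eqxx => /(_ erefl) /eqP.
by rewrite -fz; apply/negP; apply: no_dual_loop.
Qed.

Lemma branch_bound z : z \notin T -> fc z = f ->
  \sum_(g | av (fc (e z)) g) wf g < 1/4 * \sum_g wf g.
Proof.
move=> zT fz; set h := fc (e z).
have hf : h != f by rewrite /h -fz no_dual_loop.
case: crit => chi clo.
case sfh: (sub f h).
  have ch : child e fc T rt f h by rewrite /child sfh hf andbT -fz cot_edge.
  apply: le_lt_trans (clo h ch); apply: sum_sub; first exact: wF_ge0.
  move=> g avg; rewrite /in_subtree; case: (eqVneq g h) => //= gh.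
  apply/negP => A.
  have gf : g != f := av_not_f zT fz avg.
  have clM : eclosed e (~: T) by move=> y; rewrite !inE Tcl.
  have cl' := cM' peK z clM.
  have csym := connect_symH fc peK cl'.
  have br := cot_bridge zT.
  have chg : connect (adjH fc e (~: T :\ z :\ e z)) h g.
    apply: (connect_sub _ avg) => a b hab; apply: connect1.
    by apply: (cot_sub zT _ hab); rewrite fz inE eqxx.
  rewrite avoid_cot_sym in A.
  case: (connect_avoid_exit (r := avoid cot [set h]) (S := [set f]) A _).
  - by rewrite inE.
  - move=> c; move/negP: (sub_in hf sfh); apply.
    apply: connect_trans avg _; rewrite avoid_cot_sym.
    apply: (connect_sub _ c) => a b /and3P [aS bS /and3P [_ _ ab]].
    by apply: connect1; rewrite /avoid aS bS ab.
  - move=> [s0 [b [s0S e1 _ c]]]; move: s0S; rewrite inE => /eqP es0; subst s0.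
    have cfg : connect (avoid cot [set h]) f g.
      apply: connect_trans (connect1 e1) _.
      apply: (connect_sub _ c) => x y hxy; apply: connect1; exact: (avoid_in hxy).
    move/negP: br; apply; rewrite fz.
    apply: (connect_trans (y := g)).
      apply: (connect_sub _ cfg) => a1 b1 hab; apply: connect1.
      by apply: (cot_sub zT _ hab); rewrite -/h !inE eqxx orbT.
    by rewrite csym.
have hrt := sub_out hf (negbT sfh).
apply: (le_lt_trans (y := \sum_(g | ~~ sub f g) wf g)).
  apply: sum_sub; first exact: wF_ge0.
  move=> g avg; have gf : g != f := av_not_f zT fz avg.
  rewrite /in_subtree (negbTE gf) negbK.
  apply: connect_trans hrt; rewrite avoid_cot_sym; exact: avg.
rewrite sum_compl; move: chi; rewrite /wsub; lra.
Qed.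

Definition Yset (j : nat) : {set V} :=
  [set x | [exists z, [&& fc z == f, (idx z < j)%N &
     ((z \notin T) && av (fc (e z)) (tf x)) ||
     [&& (0 < idx z)%N, tf x == f & x == vert z]]]].

Lemma Yset0 : \sum_(x in Yset 0) wV x = 0.
Proof. by apply: big1 => x; rewrite inE => /existsP [z /and3P []]. Qed.

Section Pj.
Variable j : nat.
Hypothesis jk : (j <= k)%N.

Definition sj (y : D) : bool :=
  if fc y == f then (idx y < j)%N
  else [exists z, [&& z \notin T, fc z == f, (idx z < j)%N & av (fc (e z)) (fc y)]].

Lemma NT_f y : y \notin T -> fc y = f -> sj (e y) = sj y.
Proof.
move=> yT fy; have fey : fc (e y) != f by rewrite -fy no_dual_loop.
rewrite /sj fy eqxx (negbTE fey); apply/existsP/idP.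
  move=> [z /and4P [zT /eqP fz ij c]].
  case: (eqVneq z y) => [<- //|zy].
  case: (eqVneq z (e y)) => [ze|zey].
    by rewrite ze in fz; rewrite fz eqxx in fey.
  exfalso; apply: (two_edges yT zT _ _ zy zey c); rewrite ?fz ?fy ?inE //.
move=> iy; exists y; rewrite yT fy eqxx iy /=; exact: connect0.
Qed.

Lemma NT y : y \notin T -> sj (e y) = sj y.
Proof.
move=> yT; case: (eqVneq (fc y) f) => [fy|fy]; first exact: NT_f.
case: (eqVneq (fc (e y)) f) => [fey|fey].
  by rewrite -(NT_f _ fey) ?peK // Tcl.
rewrite /sj (negbTE fy) (negbTE fey).
have ed : avoid cot [set f] (fc y) (fc (e y)) by apply: cot_avoid_edge; rewrite ?inE.
apply/existsP/existsP => [] [z /and4P [zT fz ij c]]; exists z; rewrite zT fz ij /=.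
  by apply: connect_trans c _; rewrite avoid_cot_sym; exact: connect1.
exact: connect_trans c (connect1 ed).
Qed.

Lemma corner z : (sj z != sj (phi z)) =
  (fc z == f) && [&& (0 < j)%N, (j < k)%N & (idx z == j.-1) || (idx z == k.-1)].
Proof.
case: (eqVneq (fc z) f) => fz /=; last first.
  by rewrite /sj fc_phi (negbTE fz) eqxx.
rewrite /sj fc_phi fz eqxx.
have ik := idx_lt fz.
have zz := zi_idx fz.
have pz : phi z = zi (idx z).+1 by rewrite -[in LHS]zz.
case: (ltngtP (idx z).+1 k) => h.
- by rewrite pz idx_zi //; lia.
- by lia.
- by rewrite pz h zi_k findex0; lia.
Qed.

Local Notation u := (vert z0).
Local Notation v := (vert (zi j)).

Lemma H3_2 x :
  \xor_(y | (vert y == x) && (y \notin T)) (sj y != sj (e y)) (+)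
  \xor_(z | vert (phi z) == x) (sj z != sj (phi z)) = (x == u) (+) (x == v).
Proof.
rewrite big1; last by move=> y /andP [_ yT]; rewrite NT // eqxx.
rewrite /= xor_cond.
case: (boolP [&& (0 < j)%N & (j < k)%N]) => [/andP [j0 jk']|nj]; last first.
  have vu : zi j = z0.
    have : j = 0%N \/ j = k by lia.
    by case=> ->; [|exact: zi_k].
  rewrite vu addbb big1 // => z _; rewrite corner.
  by move: nj; case: (0 < j)%N; case: (j < k)%N; rewrite ?andbF.
have j1 : (j.-1 < k)%N by lia.
have k1 : (k.-1 < k)%N by rewrite prednK ?order_gt0.
have dif : zi j.-1 != zi k.-1.
  apply/negP => /eqP E; have := congr1 idx E; rewrite !idx_zi //; lia.
rewrite (eq_bigr (fun z => ((z == zi j.-1) && (v == x)) || ((z == zi k.-1) && (u == x)))).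
  by rewrite xor_two // ![x == _]eq_sym addbC.
move=> z _; rewrite corner j0 jk' /=.
have jk1 : (j.-1 == k.-1) = false.
  by apply/negbTE; apply: contra dif => /eqP ->.
rewrite -!zi_eq //.
case: (eqVneq (fc z) f) => fz /=; last by rewrite andbF.
case: (eqVneq (idx z) j.-1) => ij /=.
  have zz : z = zi j.-1 by rewrite -ij zi_idx.
  by rewrite ij jk1 zz -iterS prednK // andbT orbF eq_sym.
case: (eqVneq (idx z) k.-1) => ik /=; last by rewrite andbF.
have zz : z = zi k.-1 by rewrite -ik zi_idx.
by rewrite zz -iterS prednK ?order_gt0 // zi_k andbT eq_sym.
Qed.

Lemma Hnt_2 y : y \notin T -> sj y != sj (e y) -> vert y = u \/ vert y = v.
Proof. by move=> yT; rewrite NT // eqxx. Qed.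

Lemma Hco_2 z : sj z != sj (phi z) -> vert (phi z) = u \/ vert (phi z) = v.
Proof.
rewrite corner => /andP [/eqP fz /and3P [j0 jk' /orP [/eqP ij|/eqP ik]]].
  right; have zz : z = zi j.-1 by rewrite -ij zi_idx.
  by rewrite zz -iterS prednK.
left; have zz : z = zi k.-1 by rewrite -ik zi_idx.
by rewrite zz -iterS prednK ?order_gt0 // zi_k.
Qed.

Section WithPath.
Variable p : seq V.
Hypothesis pth : path (adjE e vert T) u p.
Hypothesis lst : last u p = v.

Lemma sv y y' : vert y \notin u :: p -> vert y' = vert y -> sj y' = sj y.
Proof. exact: (side_vertex Tcl Tbr H3_2 Hnt_2 Hco_2 pth lst). Qed.

Lemma side_at x y : x \notin u :: p -> vert y = x ->
  exists y', [/\ vert y' = x, fc y' = tf x & sj y' = sj y].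
Proof.
move=> xP yx; case: (tfH x) => y' [y'x ty']; exists y'; split => //.
by apply: sv; rewrite ?yx ?y'x.
Qed.

Lemma bnd_true :
  \sum_(x | (x \notin u :: p) && [exists y, (vert y == x) && (sj y == true)]) wV x
  <= \sum_(x in Yset j) wV x.
Proof.
apply: sum_sub => // x /andP [xP /existsP [y /andP [/eqP yx /eqP sy]]].
case: (side_at xP yx) => y' [y'x ty' sy']; rewrite sy in sy'.
rewrite inE; move: sy'; rewrite /sj; case: (eqVneq (fc y') f) => fy' /= iy.
  have i0 : (0 < idx y')%N.
    rewrite lt0n; apply/negP => /eqP i0.
    have := zi_idx fy'; rewrite i0 /= => z0y; rewrite -z0y in y'x.
    by rewrite -y'x inE eqxx in xP.
  apply/existsP; exists y'; rewrite fy' eqxx iy /=; apply/orP; right.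
  by rewrite i0 -ty' fy' y'x !eqxx.
case/existsP: iy => z /and4P [zT fz iz c].
by apply/existsP; exists z; rewrite fz iz zT -ty' c.
Qed.

Lemma bnd_false_k : j = k ->
  \sum_(x | (x \notin u :: p) && [exists y, (vert y == x) && (sj y == false)]) wV x
  <= 0.
Proof.
move=> jk'; rewrite big_pred0 // => x; apply/negbTE/negP.
case/andP => xP /existsP [y /andP [/eqP yx /eqP sy]].
case: (side_at xP yx) => y' [y'x ty' sy']; rewrite sy in sy'.
move: sy'; rewrite /sj; case: (eqVneq (fc y') f) => fy' /=.
  by rewrite jk' idx_lt.
move=> /negbT/negP; apply.
case: (connect_avoid_exit (S := [set f]) (cot_conn f (fc y')) _).
- by rewrite inE.
- by move=> c; have := avoid_start c; rewrite inE eqxx => /(_ erefl) fe; rewrite fe eqxx in fy'.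
move=> [s0 [b [s0S e1 bS c]]].
move: s0S; rewrite inE => /eqP s0f; rewrite s0f in e1.
case/existsP: e1 => z /and3P [zT /eqP fz /eqP fez].
apply/existsP; exists z; rewrite zT fz eqxx jk' idx_lt //= fez; exact: c.
Qed.

Lemma bnd_false_lt : (j < k)%N ->
  \sum_(x | (x \notin u :: p) && [exists y, (vert y == x) && (sj y == false)]) wV x
  <= \sum_(x | x \notin Yset j.+1) wV x +
     \sum_(x | (zi j \notin T) && av (fc (e (zi j))) (tf x)) wV x.
Proof.
move=> jk'; apply: sum_union => // x /andP [xP /existsP [y /andP [/eqP yx /eqP sy]]].
case: (side_at xP yx) => y' [y'x ty' sy']; rewrite sy in sy'.
case: (boolP (x \in Yset j.+1)) => xY //=.
move: xY; rewrite inE => /existsP [z /and3P [/eqP fz izj hz]].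
case: (ltngtP (idx z) j) => ij.
- exfalso; case/orP: hz => [/andP [zT c]|/and3P [i0 /eqP tfx /eqP xz]].
    have fy' : fc y' != f by rewrite ty'; exact: (av_not_f zT fz c).
    move: sy'; rewrite /sj (negbTE fy') => /negbT/negP; apply.
    by apply/existsP; exists z; rewrite zT fz eqxx ij ty' c.
  have : sj z = sj y' by apply: sv; [rewrite y'x | rewrite y'x -xz].
  by rewrite sy' /sj fz eqxx ij.
- by move: izj; rewrite ltnS leqNgt ij.
- have zz : z = zi j by rewrite -ij zi_idx.
  case/orP: hz => [/andP [zT c]|/and3P [_ _ /eqP xz]]; first by rewrite -zz zT c.
  by rewrite xz zz -lst mem_last in xP.
Qed.

End WithPath.

Hypothesis Pj : \sum_(x in Yset j) wV x <= 3/4 * \sum_x wV x.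
Hypothesis jmax : forall j', (j' <= k)%N ->
  \sum_(x in Yset j') wV x <= 3/4 * \sum_x wV x -> (j' <= j)%N.

Lemma part2_j p : simple_path (adjE e vert T) u p v ->
  balanced_separator (adjG e vert) wV (3/4) [set x in u :: p].
Proof.
case/and3P => pth /eqP lst _.
apply: (separator Tcl Tbr H3_2 Hnt_2 Hco_2 pth lst w0) => b.
have W0 := W_ge0.
case: b; first exact: le_trans (bnd_true pth lst) Pj.
case: (eqVneq j k) => [jk'|jk'].
  apply: le_trans (bnd_false_k pth lst jk') _; lra.
have jlt : (j < k)%N by rewrite ltn_neqAle jk' jk.
have big : 3/4 * \sum_x wV x < \sum_(x in Yset j.+1) wV x.
  rewrite ltNge; apply/negP => h; have := jmax jlt h; by rewrite ltnn.
apply: le_trans (bnd_false_lt pth lst jlt) _.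
rewrite sum_compl.
have bb : \sum_(x | (zi j \notin T) && av (fc (e (zi j))) (tf x)) wV x
            <= 1/4 * \sum_x wV x.
  case: (boolP (zi j \in T)) => zT.
    by rewrite big_pred0 //; lra.
  rewrite (eq_bigl (fun x => av (fc (e (zi j))) (tf x))) //.
  rewrite (sum_tf (fun g => av (fc (e (zi j))) g)) -sum_wf.
  exact/ltW/(branch_bound zT (fc_zi j)).
lra.
Qed.

End Pj.

Lemma part2 : exists du dv, [/\ fc du = f, fc dv = f &
  forall p, simple_path (adjE e vert T) (vert du) p (vert dv) ->
    balanced_separator (adjG e vert) wV (3/4) [set x in vert du :: p]].
Proof.
set W := \sum_x wV x.
pose P j := (j <= k)%N && (\sum_(x in Yset j) wV x <= 3/4 * W).
have exP : exists j, P j.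
  exists 0%N; rewrite /P Yset0 leq0n /=; have := W_ge0; rewrite -/W; lra.
have ubP : forall j, P j -> (j <= k)%N by move=> j /andP [].
case: (ex_maxnP exP ubP) => j /andP [jk Pj] maxj.
exists z0, (zi j); split; [done | exact: fc_zi | ].
move=> p; apply: (part2_j jk Pj) => j' j'k h.
by apply: maxj; rewrite /P j'k h.
Qed.

End Part2.

End Tree.
End MapP.

Local Open Scope ring_scope.

Theorem lemma14 (D V F : finType) (e n : D -> D) (vert : D -> V) (fc : D -> F)
    (R : realFieldType) (wV : V -> R) (T : {set D}) (tf : V -> F) (rt : F) :
  is_planar_map e n vert fc ->
  biconnected_rel (adjG e vert) ->
  spanning_tree e vert T ->
  (forall x, 0 <= wV x) ->
  (forall x, wV x <= 12^-1 * \sum_y wV y) ->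
  (* each vertex transfers its weight to a face containing it *)
  (forall x, exists d, vert d = x /\ fc d = tf x) ->
  let w := wF wV tf in
  (* (1) balanced node *)
  (forall f, balanced_node e fc T rt w (1/4) (3/4) f ->
     forall d, parent_dart e fc T rt f d ->
     forall p, simple_path (adjE e vert T) (vert d) p (vert (e d)) ->
       balanced_separator (adjG e vert) wV (3/4) [set x in vert d :: p])
  /\
  (* (2) no balanced node *)
  ((~ exists f, balanced_node e fc T rt w (1/4) (3/4) f) ->
     exists f, critical_node e fc T rt w (1/4) (3/4) f /\
       exists du dv, [/\ fc du = f, fc dv = f &
         forall p, simple_path (adjE e vert T) (vert du) p (vert dv) ->
           balanced_separator (adjG e vert) wV (3/4) [set x in vert du :: p]]).
Proof.
move=> pm [Gconn _] ST w0 _ tfH w; split.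
  move=> f bal d pd p sp.
  exact: (part1 pm ST Gconn w0 tfH bal pd sp).
move=> nb; case: (crit_exists pm ST Gconn w0 nb) => f crit.
exists f; split => //.
case: (pfc_surj pm f) => z0 fz0.
exact: (part2 pm ST Gconn w0 tfH crit fz0).
Qed.
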